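(* Let $H=F+G$ where $F$ satisfies the Lipschitz condition in (A1) and \[ G(\theta,x)=\sum_{j=1}^N\dot g_j(\theta,x)\,\mathbb{1}_{\bigcap_{i=1}^m\{x^{(i)}\in I_{i,j}(\theta)\}} \] is lower semi-continuous, with $N\ge1$, where each $\dot g_j:\mathbb{R}^d\times\mathbb{R}^m\to\mathbb{R}^d$ satisfies, for some $L_3,L_4,K_2>0$ and all $\theta,\theta',x,x'$, $|\dot g_j(\theta,x)-\dot g_j(\theta',x')|\le(1+|x|+|x'|)^\rho(L_3|\theta-\theta'|+L_4|x-x'|)$ and $|\dot g_j(\theta,x)|\le K_2$, and each interval $I_{i,j}(\theta)$ is of one of the forms $(-\infty,\bar g^{(i)}_j(\theta))$, $(\bar g^{(i)}_j(\theta),\infty)$, $(\tilde g^{(i)}_j(\theta),\hat g^{(i)}_j(\theta))$ with $\bar g^{(i)}_j,\tilde g^{(i)}_j,\hat g^{(i)}_j:\mathbb{R}^d\to\mathbb{R}$ Lipschitz continuous. Suppose $\mathbb{E}|X_0|^{\rho}<\infty$ and that for each $i=1,\dots,m$ the coordinate $X_0^{(i)}$ has a continuous and bounded density. Then there is $L>0$ such that $\mathbb{E}|H(\theta,X_0)-H(\theta',X_0)|\le L|\theta-\theta'|$ for all $\theta,\theta'\in\mathbb{R}^d$.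
   Context: $X_0$ is an $\mathbb{R}^m$-valued random variable with coordinates $X_0^{(1)},\dots,X_0^{(m)}$; $x^{(i)}$ denotes the $i$-th coordinate of $x\in\mathbb{R}^m$. The Lipschitz condition in (A1): there are $L_1,L_2>0$, $\rho\ge0$ with $|F(\theta,x)-F(\theta',x')|\le(1+|x|+|x'|)^\rho(L_1|\theta-\theta'|+L_2|x-x'|)$ for all $\theta,\theta'\in\mathbb{R}^d$, $x,x'\in\mathbb{R}^m$. *)

(* Defs.v *)
From HB Require Import structures.
From mathcomp Require Import all_boot all_order all_algebra.
From mathcomp Require Import all_classical all_reals all_analysis.
Set Implicit Arguments. Unset Strict Implicit. Unset Printing Implicit Defensive.
Import Order.TTheory GRing.Theory Num.Theory.
Import numFieldNormedType.Exports.
Local Open Scope ring_scope.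

Definition enorm (R : realType) (n : nat) (v : 'rV[R]_n) : R :=
  Num.sqrt (\sum_(i < n) v ord0 i ^+ 2).

Definition lipschitzR (R : realType) (d : nat) (g : 'rV[R]_d -> R) : Prop :=
  exists K : R, 0 <= K /\
    forall t t' : 'rV[R]_d, `|g t - g t'| <= K * enorm (t - t').

Inductive iform (R : realType) (d : nat) :=
| IvLt of ('rV[R]_d -> R)                     (* (-oo, gbar(theta)) *)
| IvGt of ('rV[R]_d -> R)                     (* (gbar(theta), +oo) *)
| IvBetween of ('rV[R]_d -> R) & ('rV[R]_d -> R). (* (gtilde(theta), ghat(theta)) *)

Definition in_iform (R : realType) (d : nat) (I : iform R d)
  (t : 'rV[R]_d) (y : R) : bool :=
  match I with
  | IvLt g => y < g t
  | IvGt g => g t < y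
  | IvBetween a b => (a t < y) && (y < b t)
  end.

Definition iform_lipschitz (R : realType) (d : nat) (I : iform R d) : Prop :=
  match I with
  | IvLt g => lipschitzR g
  | IvGt g => lipschitzR g
  | IvBetween a b => lipschitzR a /\ lipschitzR b
  end.

Definition Gfun (R : realType) (d m N : nat)
  (gdot : 'I_N -> 'rV[R]_d -> 'rV[R]_m -> 'rV[R]_d)
  (I : 'I_m -> 'I_N -> iform R d) (t : 'rV[R]_d) (x : 'rV[R]_m) : 'rV[R]_d :=
  \sum_(j < N)
     (if [forall i : 'I_m, in_iform (I i j) t (x ord0 i)] then gdot j t x else 0).

(* Main.v *)
Require Import Defs.
From HB Require Import structures.
From mathcomp Require Import all_boot all_order all_algebra.
From mathcomp Require Import all_classical all_reals all_analysis.
From mathcomp Require Import ring lra measurable_realfun.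
Import Order.TTheory GRing.Theory Num.Theory.
Import numFieldNormedType.Exports.
Local Open Scope ring_scope.
Local Open Scope classical_set_scope.
Set Implicit Arguments. Unset Strict Implicit.

Section Aux.
Variable R : realType.

Definition l1n (n : nat) (v : 'rV[R]_n) : R := \sum_(i < n) `|v ord0 i|.

Lemma enorm_ge0 n (v : 'rV[R]_n) : 0 <= enorm v.
Proof. exact: sqrtr_ge0. Qed.

Lemma sumsq_le (I : Type) (s : seq I) (a : I -> R) :
  (forall i, 0 <= a i) ->
  \sum_(i <- s) a i ^+ 2 <= (\sum_(i <- s) a i) ^+ 2.
Proof.
move=> a0; elim: s => [|h s IH]; first by rewrite !big_nil expr0n.
rewrite !big_cons.
have S0 : 0 <= \sum_(i <- s) a i by apply: sumr_ge0.
have := a0 h; nra.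
Qed.

Lemma enorm_le_l1 n (v : 'rV[R]_n) : enorm v <= l1n v.
Proof.
rewrite /enorm /l1n.
have S0 : 0 <= \sum_(i < n) `|v ord0 i| by apply: sumr_ge0.
rewrite -(ger0_norm S0) -(sqrtr_sqr (\sum_(i < n) `|v ord0 i|)) ler_sqrt ?sqr_ge0 //.
have H := @sumsq_le _ (index_enum 'I_n) (fun i => `|v ord0 i|) (fun i => normr_ge0 _).
apply: (le_trans _ H).
by apply: ler_sum => i _; rewrite real_normK ?num_real.
Qed.

Lemma coord_le_enorm n (v : 'rV[R]_n) i : `|v ord0 i| <= enorm v.
Proof.
rewrite /enorm -sqrtr_sqr ler_sqrt; last by apply: sumr_ge0 => j _; exact: sqr_ge0.
rewrite (bigD1 i) //= lerDl; apply: sumr_ge0 => j _; exact: sqr_ge0.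
Qed.

Lemma l1_le_enorm n (v : 'rV[R]_n) : l1n v <= n%:R * enorm v.
Proof.
rewrite /l1n; apply: (@le_trans _ _ (\sum_(i < n) enorm v)).
  by apply: ler_sum => i _; exact: coord_le_enorm.
by rewrite sumr_const card_ord mulr_natl.
Qed.

Lemma l1D n (u v : 'rV[R]_n) : l1n (u + v) <= l1n u + l1n v.
Proof.
rewrite /l1n -big_split /=; apply: ler_sum => i _; rewrite mxE; exact: ler_normD.
Qed.

Lemma l1N n (u : 'rV[R]_n) : l1n (- u) = l1n u.
Proof. by apply: eq_bigr => i _; rewrite mxE normrN. Qed.

Lemma l10 n : l1n (0 : 'rV[R]_n) = 0.
Proof. by rewrite /l1n big1 // => i _; rewrite mxE normr0. Qed.

Lemma l1_sum n (J : finType) (f : J -> 'rV[R]_n) :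
  l1n (\sum_j f j) <= \sum_j l1n (f j).
Proof.
rewrite /l1n exchange_big /=; apply: ler_sum => i _.
rewrite summxE; exact: ler_norm_sum.
Qed.

Lemma enorm0 n : enorm (0 : 'rV[R]_n) = 0.
Proof. by rewrite /enorm big1 ?sqrtr0 // => i _; rewrite mxE expr0n. Qed.

End Aux.
Section Aux2.
Variable R : realType.

Lemma flip_lt (u v y : R) : (y < u) != (y < v) -> Num.min u v <= y <= Num.max u v.
Proof.
case: (leP u v) => uv; case: (ltP y u) => yu; case: (ltP y v) => yv //= _;
  first [exfalso; lra | lra].
Qed.

Lemma flip_gt (u v y : R) : (u < y) != (v < y) -> Num.min u v <= y <= Num.max u v.
Proof.
case: (leP u v) => uv; case: (ltP u y) => yu; case: (ltP v y) => yv //= _;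
  first [exfalso; lra | lra].
Qed.

Variable d : nat.

Definition bnd1 (I : iform R d) : 'rV[R]_d -> R :=
  match I with IvLt g => g | IvGt g => g | IvBetween a _ => a end.
Definition bnd2 (I : iform R d) : 'rV[R]_d -> R :=
  match I with IvLt g => g | IvGt g => g | IvBetween _ b => b end.

Definition Jset (g : 'rV[R]_d -> R) (t t' : 'rV[R]_d) : set R :=
  `[Num.min (g t) (g t'), Num.max (g t) (g t')]%classic.

Lemma bad_sub (I : iform R d) t t' y : in_iform I t y != in_iform I t' y ->
  Jset (bnd1 I) t t' y \/ Jset (bnd2 I) t t' y.
Proof.
rewrite /Jset /=; case: I => [g|g|a b] /=.
- by move/flip_lt => h; left; rewrite in_itv /=.
- by move/flip_gt => h; left; rewrite in_itv /=.
- case: (boolP ((a t < y) != (a t' < y))) => [/flip_gt h _|].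
    by left; rewrite in_itv.
  rewrite negbK => /eqP <-; case: (a t < y) => //= /flip_lt h.
  by right; rewrite in_itv.
Qed.

Lemma bad_ind (I : iform R d) t t' y :
  ((in_iform I t y != in_iform I t' y) : nat)%:R <=
  (\1_(Jset (bnd1 I) t t') y + \1_(Jset (bnd2 I) t t') y : R).
Proof.
have h0 : forall A, (0 : R) <= \1_A y by move=> A; rewrite indicE.
case: (boolP (in_iform I t y != in_iform I t' y)) => [/bad_sub []|_].
- by move=> h; rewrite indicE (mem_set h) /= lerDl.
- by move=> h; rewrite [X in _ <= _ + X]indicE (mem_set h) /= lerDr.
- by rewrite /= addr_ge0.
Qed.

End Aux2.

Lemma forall_flip (R : realType) (m : nat) (P Q : 'I_m -> bool) :
  (([forall i, P i] != [forall i, Q i]) : nat)%:R <=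
  \sum_(i < m) (((P i != Q i) : nat)%:R : R).
Proof.
have s0 : forall (S : pred 'I_m), 0 <= \sum_(i < m | S i) (((P i != Q i) : nat)%:R : R).
  by move=> S; apply: sumr_ge0 => i _; exact: ler0n.
case: (boolP [exists i, P i != Q i]) => [/existsP [i hi] | /existsPn h].
  rewrite (bigD1 i) //= hi /=; apply: (@le_trans _ _ 1).
    by case: (_ != _).
  by rewrite lerDl.
have -> : [forall i, P i] = [forall i, Q i].
  by apply: eq_forallb => i; move: (h i); rewrite negbK => /eqP.
by rewrite eqxx; apply: s0.
Qed.

Section Pointwise.
Variables (R : realType) (d m N : nat) (rho L1 L2 L3 L4 K2 : R).
Variables (F : 'rV[R]_d -> 'rV[R]_m -> 'rV[R]_d)
  (gdot : 'I_N -> 'rV[R]_d -> 'rV[R]_m -> 'rV[R]_d)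
  (I : 'I_m -> 'I_N -> iform R d).
Hypothesis L3ge0 : 0 <= L3.
Hypothesis K0 : 0 <= K2.
Hypothesis hF : forall t t' x x',
     enorm (F t x - F t' x') <=
     (1 + enorm x + enorm x') `^ rho * (L1 * enorm (t - t') + L2 * enorm (x - x')).
Hypothesis hg : forall j t t' x x',
     enorm (gdot j t x - gdot j t' x') <=
     (1 + enorm x + enorm x') `^ rho * (L3 * enorm (t - t') + L4 * enorm (x - x')).
Hypothesis hK : forall j t x, enorm (gdot j t x) <= K2.

Lemma pointwise t t' (x : 'rV[R]_m) :
  enorm ((F t x + Gfun gdot I t x) - (F t' x + Gfun gdot I t' x)) <=
  d%:R * ((1 + enorm x + enorm x) `^ rho * ((L1 + N%:R * L3) * enorm (t - t'))) +
  d%:R * K2 * \sum_(j < N) \sum_(i < m)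
    (\1_(Jset (bnd1 (I i j)) t t') (x ord0 i) + \1_(Jset (bnd2 (I i j)) t t') (x ord0 i)).
Proof.
set p := (1 + enorm x + enorm x) `^ rho.
set dl := enorm (t - t').
have p0 : 0 <= p by apply: powR_ge0.
have dl0 : 0 <= dl by apply: enorm_ge0.
have d0 : (0 : R) <= d%:R by apply: ler0n.
rewrite opprD addrACA.
apply: le_trans (enorm_le_l1 _) _.
apply: le_trans (l1D _ _) _.
have hFb : l1n (F t x - F t' x) <= d%:R * (p * (L1 * dl)).
  apply: le_trans (l1_le_enorm _) _; apply: ler_wpM2l => //.
  by have := hF t t' x x; rewrite subrr enorm0 mulr0 addr0.
have hGb : l1n (Gfun gdot I t x - Gfun gdot I t' x) <=
   \sum_(j < N) (d%:R * (p * (L3 * dl)) + d%:R * K2 * \sum_(i < m)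
    (\1_(Jset (bnd1 (I i j)) t t') (x ord0 i) + \1_(Jset (bnd2 (I i j)) t t') (x ord0 i))).
  rewrite /Gfun -sumrB; apply: le_trans (l1_sum _) _; apply: ler_sum => j _.
  set ct := [forall i, _].
  set ct' := [forall i, _].
  have key : l1n ((if ct then gdot j t x else 0) - (if ct' then gdot j t' x else 0))
      <= d%:R * (p * (L3 * dl)) + d%:R * K2 * ((ct != ct') : nat)%:R.
    have a0 : 0 <= d%:R * (p * (L3 * dl)) by rewrite !mulr_ge0.
    case: ifP => c1; case: ifP => c2 /=.
    - rewrite mulr0 addr0; apply: le_trans (l1_le_enorm _) _; apply: ler_wpM2l => //.
      by have := hg j t t' x x; rewrite subrr enorm0 mulr0 addr0.
    - rewrite subr0 mulr1; apply: le_trans (l1_le_enorm _) _.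
      by rewrite -[X in X <= _]add0r; apply: lerD => //; apply: ler_wpM2l.
    - rewrite sub0r l1N mulr1; apply: le_trans (l1_le_enorm _) _.
      by rewrite -[X in X <= _]add0r; apply: lerD => //; apply: ler_wpM2l.
    - by rewrite subrr l10 mulr0 addr0.
  apply: le_trans key _; apply: lerD => //; apply: ler_wpM2l; first by rewrite mulr_ge0.
  apply: le_trans (forall_flip _ _ _) _; apply: ler_sum => i _.
  exact: bad_ind.
apply: le_trans (lerD hFb hGb) _.
rewrite big_split sumr_const card_ord -mulr_sumr /=.
rewrite le_eqVlt; apply/orP; left; apply/eqP.
rewrite -mulr_natl; ring.
Qed.

End Pointwise.

Lemma powR_bound (R : realType) (rho a : R) : (0 <= rho)%R -> (0 <= a)%R ->
  ((1 + a + a) `^ rho <= 3 `^ rho * (1 + a `^ rho))%R.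
Proof.
move=> r0 a0.
have m0 : (0 <= Num.max 1 a)%R by rewrite le_max ler01.
apply: (@le_trans _ _ ((3 * Num.max 1 a) `^ rho)%R).
  apply: ge0_ler_powR => //; rewrite ?nnegrE; first by lra.
  - by rewrite mulr_ge0.
  - case: (leP 1 a) => h; lra.
rewrite powRM //.
apply: ler_wpM2l; first exact: powR_ge0.
case: (leP 1 a) => h.
  by rewrite lerDr ler01.
by rewrite powR1 lerDl powR_ge0.
Qed.

Section Meas.
Local Open Scope ereal_scope.

Lemma le_integral_nm (R : realType) (dT : measure_display) (T : measurableType dT)
  (mu : {measure set T -> \bar R}) (f1 f2 : T -> \bar R) :
  (forall x, 0 <= f1 x) -> (forall x, f1 x <= f2 x) ->
  \int[mu]_x f1 x <= \int[mu]_x f2 x.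
Proof.
move=> f10 f12.
have f20 : forall x, 0 <= f2 x by move=> x; apply: le_trans (f12 x).
rewrite !ge0_integralTE //.
apply: ereal_sup_le => _ [h hh <-]; exists h => //= x.
exact: le_trans (hh x) (f12 x).
Qed.

Lemma dens_bound (R : realType) (f : R -> R) (M : R) (Pi : set R -> \bar R) :
  continuous f -> (forall y, `|f y| <= M)%R -> (forall y, 0 <= f y)%R ->
  (forall A : set R, measurable A ->
     Pi A = (\int[lebesgue_measure]_(y in A) (f y)%:E)) ->
  forall a b, (a <= b)%R -> Pi `[a, b]%classic <= (M * (b - a))%:E.
Proof.
move=> cf fM f0 hP a b ab.
rewrite hP; last exact: measurable_itv.
apply: (@le_trans _ _ (\int[lebesgue_measure]_(y in `[a, b]%classic) (cst M%:E) y)).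
  apply: (@ge0_le_integral _ _ _ lebesgue_measure _ (measurable_itv `[a, b]%R)) => //.
  - by move=> y _; rewrite lee_fin.
  - apply/measurable_EFinP; apply: measurable_funTS.
    exact: continuous_measurable_fun.
  - by move=> y _; rewrite lee_fin (le_trans (ler_norm _) (fM y)).
rewrite integral_cst; last exact: measurable_itv.
have M0 : (0 <= M)%R by exact: (le_trans (normr_ge0 (f 0%R)) (fM 0%R)).
have := lebesgue_measure_itv `[a, b]%R; rewrite /= => ->.
case: ifP => _.
  by rewrite -EFinD -EFinM mulrC.
by rewrite mule0 lee_fin mulr_ge0 // subr_ge0.
Qed.

End Meas.

Lemma maxmin (R : realType) (u v : R) : Num.max u v - Num.min u v = `|u - v|.
Proof.
case: (leP u v) => h.
  by rewrite distrC ger0_norm // subr_ge0.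
by rewrite ger0_norm // subr_ge0 ltW.
Qed.

Lemma minmax (R : realType) (u v : R) : Num.min u v <= Num.max u v.
Proof. by case: (leP u v) => h //; rewrite ltW. Qed.

Unset Implicit Arguments.
Unset Strict Implicit.

Theorem mainTheorem7 (R : realType) (dT : measure_display)
  (T : measurableType dT) (P : probability T R)
  (d m N : nat) (rho L1 L2 L3 L4 K2 : R)
  (X : 'I_m -> T -> R)
  (F : 'rV[R]_d -> 'rV[R]_m -> 'rV[R]_d)
  (gdot : 'I_N -> 'rV[R]_d -> 'rV[R]_m -> 'rV[R]_d)
  (I : 'I_m -> 'I_N -> iform R d) :
  (* coordinates of X_0 are random variables *)
  (forall i, measurable_fun setT (X i)) ->
  (* (A1) *)
  0 < L1 -> 0 < L2 -> 0 <= rho ->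
  (forall t t' x x',
     enorm (F t x - F t' x') <=
     (1 + enorm x + enorm x') `^ rho * (L1 * enorm (t - t') + L2 * enorm (x - x'))) ->
  (* assumptions on G *)
  (0 < N)%N ->
  0 < L3 -> 0 < L4 -> 0 < K2 ->
  (forall j t t' x x',
     enorm (gdot j t x - gdot j t' x') <=
     (1 + enorm x + enorm x') `^ rho * (L3 * enorm (t - t') + L4 * enorm (x - x'))) ->
  (forall j t x, enorm (gdot j t x) <= K2) ->
  (forall i j, iform_lipschitz (I i j)) ->
  (* G is lower semi-continuous (each coordinate, jointly in (theta, x)) *)
  (forall k : 'I_d, lower_semicontinuous
     (fun z : 'rV[R]_d * 'rV[R]_m => ((Gfun gdot I z.1 z.2) ord0 k)%:E)) ->
  (* E |X_0|^rho < oo *)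
  (\int[P]_w ((enorm (\row_i X i w)) `^ rho)%:E < +oo)%E ->
  (* each coordinate X_0^(i) has a continuous and bounded density *)
  (forall i, exists f : R -> R,
     [/\ continuous f, (exists M : R, forall y, `|f y| <= M),
         (forall y, 0 <= f y) &
         forall A : set R, measurable A ->
           P (X i @^-1` A) = (\int[lebesgue_measure]_(y in A) (f y)%:E)%E]) ->
  exists L : R, 0 < L /\
    forall t t' : 'rV[R]_d,
      (\int[P]_w (enorm ((F t (\row_i X i w) + Gfun gdot I t (\row_i X i w))
                       - (F t' (\row_i X i w) + Gfun gdot I t' (\row_i X i w))))%:E
        <= (L * enorm (t - t'))%:E)%E.
Proof.
move=> hX L1p L2p rho0 hF Npos L3p L4p K2p hg hK hI _ hE hdens.
have hM : forall i, exists M : R, 0 <= M /\ forall a b, a <= b ->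
    (P (X i @^-1` `[a, b]%classic) <= (M * (b - a))%:E)%E.
  move=> i; have [f [cf [M hMf] f0 hPf]] := hdens i.
  exists M; split; first exact: (le_trans (normr_ge0 (f 0)) (hMf 0)).
  exact: (@dens_bound _ f M (fun A => P (X i @^-1` A))).
have [Mf hMf] := choice hM.
have hKl : forall ij : 'I_m * 'I_N, exists K : R, 0 <= K /\ forall t t',
    `|bnd1 (I ij.1 ij.2) t - bnd1 (I ij.1 ij.2) t'| <= K * enorm (t - t') /\
    `|bnd2 (I ij.1 ij.2) t - bnd2 (I ij.1 ij.2) t'| <= K * enorm (t - t').
  move=> [i j]; have := hI i j; case: (I i j) => [g|g|a b] /=.
  - by move=> [K [K0 hK']]; exists K; split => // t t'; split; exact: hK'.
  - by move=> [K [K0 hK']]; exists K; split => // t t'; split; exact: hK'.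
  - move=> [[Ka [Ka0 ha]] [Kb [Kb0 hb]]]; exists (Ka + Kb); split; first exact: addr_ge0.
    move=> t t'; split.
      apply: le_trans (ha t t') _; apply: ler_wpM2r; first exact: enorm_ge0.
      by rewrite lerDl.
    apply: le_trans (hb t t') _; apply: ler_wpM2r; first exact: enorm_ge0.
    by rewrite lerDr.
have [Kf hKf] := choice hKl.
have hJ : forall i j t t' (g : 'rV[R]_d -> R),
    (forall t t', `|g t - g t'| <= Kf (i, j) * enorm (t - t')) ->
    (P (X i @^-1` Jset g t t') <= (Mf i * Kf (i, j) * enorm (t - t'))%:E)%E.
  move=> i j t t' g hg'; have [M0 hb] := hMf i.
  apply: le_trans (hb _ _ (minmax (g t) (g t'))) _.
  by rewrite lee_fin -mulrA ler_wpM2l // maxmin.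
set e := fun w => enorm (\row_i X i w).
have me : measurable_fun setT e.
  have -> : e = Num.sqrt \o (fun w => \sum_(i < m) X i w ^+ 2).
    apply/funext => w; rewrite /e /enorm /=; congr Num.sqrt.
    by apply: eq_bigr => i _; rewrite mxE.
  apply: measurableT_comp.
  exact: (continuous_measurable_fun (@sqrt_continuous R)).
  by apply: measurable_sum => i; apply: measurable_funX.
have mer : measurable_fun setT (fun w => (e w `^ rho)%:E).
  apply/measurable_EFinP; exact: (measurableT_comp (measurable_powR rho) me).
have er0 : forall w, (0 <= (e w `^ rho)%:E)%E by move=> w; rewrite lee_fin powR_ge0.
set Q := fine (\int[P]_w (e w `^ rho)%:E)%E.
have hQ : (\int[P]_w (e w `^ rho)%:E)%E = Q%:E.
  by rewrite fineK // ge0_fin_numE //; apply: integral_ge0 => w _.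
have Q0 : 0 <= Q by rewrite -lee_fin -hQ; apply: integral_ge0 => w _.
have M0 : forall i, 0 <= Mf i by move=> i; case: (hMf i).
have Kf0 : forall ij, 0 <= Kf ij by move=> ij; case: (hKf ij).
set C2 := d%:R * K2.
have C20 : 0 <= C2 by rewrite mulr_ge0 // ltW.
set S0 := \sum_(j < N) \sum_(i < m) (C2 * (Mf i * Kf (i, j)) + C2 * (Mf i * Kf (i, j))).
have S00 : 0 <= S0.
  by apply: sumr_ge0 => j _; apply: sumr_ge0 => i _; rewrite addr_ge0 // mulr_ge0 // mulr_ge0.
set A := d%:R * (L1 + N%:R * L3) * 3 `^ rho.
have A0 : 0 <= A by rewrite !mulr_ge0 ?powR_ge0 // addr_ge0 ?mulr_ge0 // ltW.
exists (1 + A * (1 + Q) + S0); split.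
  have : 0 <= A * (1 + Q) by rewrite mulr_ge0 // addr_ge0.
  lra.
move=> t t'.
set dl := enorm (t - t').
have dl0 : 0 <= dl by apply: enorm_ge0.
set C1 := A * dl.
have C10 : 0 <= C1 by rewrite mulr_ge0.
set A1 := fun i j => X i @^-1` Jset (bnd1 (I i j)) t t'.
set A2 := fun i j => X i @^-1` Jset (bnd2 (I i j)) t t'.
have mA1 : forall i j, measurable (A1 i j).
  move=> i j; rewrite /A1 -[X in measurable X]setTI; apply: hX => //; exact: measurable_itv.
have mA2 : forall i j, measurable (A2 i j).
  move=> i j; rewrite /A2 -[X in measurable X]setTI; apply: hX => //; exact: measurable_itv.
apply: (le_trans (le_integral_nm P (f2 := fun w =>
  ((C1%:E + (C1 * e w `^ rho)%:E) + \sum_(j < N) \sum_(i < m)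
     ((C2 * \1_(A1 i j) w)%:E + (C2 * \1_(A2 i j) w)%:E))%E) _ _)).
- by move=> w; rewrite lee_fin enorm_ge0.
- move=> w.
  have hp := pointwise I (ltW L3p) (ltW K2p) hF hg hK t t' (\row_i X i w).
  have -> : (\sum_(j < N) \sum_(i < m) ((C2 * \1_(A1 i j) w)%:E + (C2 * \1_(A2 i j) w)%:E))%E
    = (C2 * \sum_(j < N) \sum_(i < m) (\1_(Jset (bnd1 (I i j)) t t') ((\row_i X i w) ord0 i)
        + \1_(Jset (bnd2 (I i j)) t t') ((\row_i X i w) ord0 i)))%:E.
    rewrite mulr_sumr -sumEFin; apply: eq_bigr => j _.
    rewrite mulr_sumr -sumEFin; apply: eq_bigr => i _.
    by rewrite mxE mulrDr EFinD.
  rewrite -!EFinD lee_fin; apply: le_trans hp _; apply: lerD; last by [].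
  have hpb := powR_bound rho0 (enorm_ge0 (\row_i X i w)).
  apply: (@le_trans _ _ (d%:R * ((3 `^ rho * (1 + e w `^ rho)) * ((L1 + N%:R * L3) * dl)))).
    apply: ler_wpM2l; first exact: ler0n.
    apply: ler_wpM2r hpb; apply: mulr_ge0 => //; apply: addr_ge0; [exact: ltW | apply: mulr_ge0; [exact: ler0n | exact: ltW]].
  rewrite le_eqVlt; apply/orP; left; apply/eqP.
  by rewrite /C1 /A; ring.
have mind : forall B : set T, measurable B ->
    measurable_fun setT (fun w => (C2 * \1_B w)%:E).
  move=> B mB; apply/measurable_EFinP; apply: measurable_funM => //; exact: measurable_indic.
have ind0 : forall (B : set T) w, (0 <= (C2 * \1_B w)%:E)%E.
  by move=> B w; rewrite lee_fin mulr_ge0 // indicE.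
have mSj : forall j, measurable_fun setT (fun w => \sum_(i < m)
    ((C2 * \1_(A1 i j) w)%:E + (C2 * \1_(A2 i j) w)%:E))%E.
  move=> j; apply: emeasurable_sum => i; apply: emeasurable_funD; exact: mind.
have Sj0 : forall j w, (0 <= \sum_(i < m)
    ((C2 * \1_(A1 i j) w)%:E + (C2 * \1_(A2 i j) w)%:E))%E.
  by move=> j w; apply: sume_ge0 => i _; apply: adde_ge0.
have mS : measurable_fun setT (fun w => \sum_(j < N) \sum_(i < m)
    ((C2 * \1_(A1 i j) w)%:E + (C2 * \1_(A2 i j) w)%:E))%E.
  by apply: emeasurable_sum => j; exact: mSj.
have mS1 : measurable_fun setT (fun w => (C1%:E + (C1 * e w `^ rho)%:E))%E.
  apply/measurable_EFinP; exact: (measurable_funD (measurable_cst C1) (measurable_funM (measurable_cst C1) (measurableT_comp (measurable_powR rho) me))).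
have mI : forall B : set T, measurable B -> measurable_fun setT (fun w => (\1_B w : R)%:E).
  by move=> B mB; apply/measurable_EFinP; exact: measurable_indic.
have I0 : forall (B : set T) w, (0 <= (\1_B w : R)%:E)%E.
  by move=> B w; rewrite lee_fin indicE.
have hint : forall j, (\int[P]_w (\sum_(i < m)
    ((C2 * \1_(A1 i j) w)%:E + (C2 * \1_(A2 i j) w)%:E))
    = \sum_(i < m) (C2%:E * P (A1 i j) + C2%:E * P (A2 i j)))%E.
  move=> j.
  rewrite (ge0_integral_sum P measurableT
    (fun i => emeasurable_funD (mind _ (mA1 i j)) (mind _ (mA2 i j)))
    (fun i w _ => adde_ge0 (ind0 _ w) (ind0 _ w))).
  apply: eq_bigr => i _.
  rewrite (ge0_integralD P measurableT (fun w _ => ind0 _ w) (mind _ (mA1 i j))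
     (fun w _ => ind0 _ w) (mind _ (mA2 i j))).
  rewrite (ge0_integralZl_EFin P measurableT (fun w _ => I0 (A1 i j) w) (mI _ (mA1 i j)) C20).
  rewrite (ge0_integralZl_EFin P measurableT (fun w _ => I0 (A2 i j) w) (mI _ (mA2 i j)) C20).
  by rewrite !integral_indic // !setIT.
have f10 : forall w, (0 <= C1%:E + (C1 * e w `^ rho)%:E)%E.
  by move=> w; rewrite adde_ge0 // lee_fin mulr_ge0 // powR_ge0.
have S0w : forall w, (0 <= \sum_(j < N) \sum_(i < m)
    ((C2 * \1_(A1 i j) w)%:E + (C2 * \1_(A2 i j) w)%:E))%E.
  by move=> w; apply: sume_ge0 => j _; exact: Sj0.
rewrite (ge0_integralD P measurableT (fun w _ => f10 w) mS1 (fun w _ => S0w w) mS).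
have e0 : forall w, (0 <= (C1 * e w `^ rho)%:E)%E.
  by move=> w; rewrite lee_fin mulr_ge0 // powR_ge0.
have me1 : measurable_fun setT (fun w => (C1 * e w `^ rho)%:E).
  apply/measurable_EFinP.
  exact: (measurable_funM (measurable_cst C1) (measurableT_comp (measurable_powR rho) me)).
have c10 : (0 <= C1%:E)%E by rewrite lee_fin.
rewrite (ge0_integralD P measurableT (fun w _ => c10) (measurable_cst _) (fun w _ => e0 w) me1).
have hc : (\int[P]_w C1%:E = C1%:E)%E.
  have hP1 : ((P : {measure set T -> \bar R}) [set: T] = 1)%E by exact: probability_setT.
  by have := integral_cst P measurableT C1%:E; rewrite hP1 mule1.
rewrite hc.
rewrite (ge0_integralZl_EFin P measurableT (fun w _ => er0 w) mer C10) hQ.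
rewrite (ge0_integral_sum P measurableT mSj (fun j w _ => Sj0 j w)).
under eq_bigr do rewrite hint.
apply: (@le_trans _ _ (C1%:E + C1%:E * Q%:E + \sum_(j < N) \sum_(i < m)
   ((C2 * (Mf i * Kf (i, j) * dl))%:E + (C2 * (Mf i * Kf (i, j) * dl))%:E))%E).
  apply: leeD => //; apply: lee_sum => j _; apply: lee_sum => i _.
  apply: leeD; rewrite [X in (_ <= X)%E]EFinM; apply: lee_wpmul2l; rewrite ?lee_fin //.
    by apply: hJ => s s'; exact: ((hKf (i, j)).2 s s').1.
  by apply: hJ => s s'; exact: ((hKf (i, j)).2 s s').2.
have -> : (\sum_(j < N) \sum_(i < m)
   ((C2 * (Mf i * Kf (i, j) * dl))%:E + (C2 * (Mf i * Kf (i, j) * dl))%:E))%E = (S0 * dl)%:E.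
  rewrite /S0 mulr_suml -sumEFin; apply: eq_bigr => j _.
  rewrite mulr_suml -sumEFin; apply: eq_bigr => i _.
  by rewrite -EFinD; congr EFin; ring.
rewrite -EFinM -!EFinD lee_fin /C1.
suff -> : (1 + A * (1 + Q) + S0) * dl = A * dl + A * dl * Q + S0 * dl + dl by rewrite lerDl.
ring.
Qed.
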